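(* Let $G=(V,E)$ be a graph, $d\geq 1$, and let $u,v,w\in V$ be distinct vertices. Suppose that $u\in N_G(v)\subseteq N_G(w)\cup\{w\}$ and that $uw$ is an $\mathcal{R}_d$-bridge in $G$. Then $uv$ is an $\mathcal{R}_d$-bridge in $G-w$.
   Context: For a graph $G$, the $d$-dimensional generic rigidity matroid $\mathcal{R}_d(G)$ is the matroid on $E(G)$ given by linear independence of the rows of the rigidity matrix of a generic $d$-dimensional framework $(G,p)$ (positions with coordinates algebraically independent over $\mathbb{Q}$); it depends only on $G$. Its rank function is $r_d$, and for a graph $H$ we write $r_d(H)$ for the rank of $E(H)$. An edge $e$ of $G$ is an $\mathcal{R}_d$-bridge of $G$ if $r_d(G-e)=r_d(G)-1$. $N_G(x)$ denotes the neighbourhood of $x$. *)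

(* Defs.v *)
From HB Require Import structures.
From mathcomp Require Import all_boot all_order all_algebra.
From mathcomp Require Import reals.
From mathcomp Require Import mpoly.
Set Implicit Arguments. Unset Strict Implicit. Unset Printing Implicit Defensive.
Import GRing.Theory Num.Theory.
Local Open Scope ring_scope.

Definition simple_graph (n : nat) (g : rel 'I_n) : Prop :=
  ssrbool.symmetric g /\ irreflexive g.

Definition del_edge (n : nat) (g : rel 'I_n) (x y : 'I_n) : rel 'I_n :=
  fun a b => g a b && ~~ (((a == x) && (b == y)) || ((a == y) && (b == x))).

(* G - w : delete vertex w (w kept as an isolated vertex; isolated vertices
   contribute only zero columns to the rigidity matrix). *)
Definition del_vertex (n : nat) (g : rel 'I_n) (w : 'I_n) : rel 'I_n :=
  fun a b => [&& g a b, a != w & b != w].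

(* A d-dimensional placement of 'I_n: row x of P is p(x) in R^d. *)

(* Generic placement: the n*d coordinates are algebraically independent
   over Q, i.e. no nonzero rational polynomial in n*d variables vanishes
   at them. *)
Definition generic (R : realType) (n d : nat) (P : 'M[R]_(n, d)) : Prop :=
  forall q : {mpoly rat[n * d]}, q != 0 ->
    mmap (@ratr R) (fun k => mxvec P 0 k) q != 0.

Definition rig_row (R : realType) (n d : nat) (P : 'M[R]_(n, d)) (x y : 'I_n)
  : 'rV[R]_(n * d) :=
  mxvec (\matrix_(i < n, k < d)
           (if i == x then P x k - P y k
            else if i == y then P y k - P x k else 0)).

Definition rig_rank (R : realType) (n d : nat) (g : rel 'I_n) (P : 'M[R]_(n, d))
  : nat :=
  \rank (\sum_(xy : 'I_n * 'I_n | g xy.1 xy.2) <<rig_row P xy.1 xy.2>>)%MS.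

(* xy is an R_d-bridge of G (computed at the generic placement P):
   xy is an edge and r_d(G - xy) = r_d(G) - 1. *)
Definition rd_bridge (R : realType) (n d : nat) (g : rel 'I_n) (P : 'M[R]_(n, d))
  (x y : 'I_n) : Prop :=
  g x y /\ (rig_rank (del_edge g x y) P + 1 = rig_rank g P)%N.

(* Main.v *)
Require Import Defs.
From HB Require Import structures.
From mathcomp Require Import all_boot all_order all_algebra.
From mathcomp Require Import reals.
From mathcomp Require Import mpoly perm fingroup zify.
From Stdlib Require Import FunctionalExtensionality.
Set Implicit Arguments. Unset Strict Implicit. Unset Printing Implicit Defensive.
Import GRing.Theory Num.Theory.
Local Open Scope ring_scope.

Section Rig.
Variables (n d : nat).

Definition rowT (T : pzRingType) (c : 'I_n -> 'I_d -> T) (x y : 'I_n) : 'rV[T]_(n * d) :=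
  mxvec (\matrix_(i < n, k < d)
           (if i == x then c x k - c y k
            else if i == y then c y k - c x k else 0)).

Definition AT (T : pzRingType) (Y : rel 'I_n) (c : 'I_n -> 'I_d -> T)
  : 'M[T]_(#|{: 'I_n * 'I_n}|, n * d) :=
  \matrix_(i, j) (if Y (enum_val i).1 (enum_val i).2
                  then rowT c (enum_val i).1 (enum_val i).2 0 j else 0).

Lemma map_AT (T T' : pzRingType) (f : {rmorphism T -> T'}) Y c :
  map_mx f (AT Y c) = AT Y (fun i k => f (c i k)).
Proof.
apply/matrixP => i j; rewrite !mxE; case: ifP => _; last by rewrite rmorph0.
rewrite /rowT.
have -> : forall M : 'M[T]_(n,d), f (mxvec M 0 j) = mxvec (map_mx f M) 0 j.
  by move=> M; rewrite -map_mxvec mxE.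
congr (mxvec _ 0 j); apply/matrixP => a b; rewrite !mxE.
by case: ifP => _; [rewrite rmorphB | case: ifP => _; [rewrite rmorphB | rewrite rmorph0]].
Qed.

Lemma rig_rank_AT (R : realType) (Y : rel 'I_n) (P : 'M[R]_(n,d)) :
  rig_rank Y P = \rank (AT Y (fun i k => P i k)).
Proof.
apply/eqmx_rank; apply/andP; split.
- apply/sumsmx_subP => e Ye; rewrite genmxE.
  have -> : rig_row P e.1 e.2 = row (enum_rank e) (AT Y (fun i k => P i k)).
    by apply/rowP => j; rewrite !mxE enum_rankK Ye.
  exact: row_sub.
- apply/row_subP => i.
  have -> : row i (AT Y (fun i k => P i k)) = if Y (enum_val i).1 (enum_val i).2
       then rig_row P (enum_val i).1 (enum_val i).2 else 0.
    by apply/rowP => j; rewrite !mxE; case: ifP => _ //; rewrite mxE.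
  case: ifP => Ye; last by rewrite sub0mx.
  by apply: (sumsmx_sup (enum_val i)) => //; rewrite genmxE.
Qed.


Lemma exists_minor (F : fieldType) m N (B : 'M[F]_(m, N)) :
  exists f : 'I_(\rank B) -> 'I_m, exists h : 'I_(\rank B) -> 'I_N,
    \det (mxsub f h B) != 0.
Proof.
set B1 := rowsub (maxrankfun B) B.
have E : \rank B1^T = \rank B by rewrite mxrank_tr /B1 eq_maxrowsub.
move: (maxrowsub_free B1^T); move: (maxrankfun B1^T).
move: E; move: (\rank B1^T) => k E; subst k => h hfree.
exists (maxrankfun B), h.
have -> : mxsub (maxrankfun B) h B = (rowsub h B1^T)^T.
  by apply/matrixP => i j; rewrite !mxE.
by rewrite det_tr -unitfE -unitmxE -row_free_unit.
Qed.

Lemma generic_max (R : realType) (Y : rel 'I_n) (P Z : 'M[R]_(n,d)) :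
  generic P -> (rig_rank Y Z <= rig_rank Y P)%N.
Proof.
move=> gP; rewrite !rig_rank_AT.
set B := AT Y (fun i k => Z i k); set A := AT Y (fun i k => P i k).
have [f [h dB]] := exists_minor B.
pose X := AT Y (fun i k => ('X_(mxvec_index i k) : {mpoly rat[n * d]})).
have evE : forall Q : 'M[R]_(n,d),
    map_mx (mmap (@ratr R) (fun k => mxvec Q 0 k)) X = AT Y (fun i k => Q i k).
  move=> Q; rewrite /X map_AT; congr AT.
  apply: functional_extensionality => i; apply: functional_extensionality => k.
  by rewrite [LHS]mmapX mmap1U mxvecE.
set D := \det (mxsub f h X).
have DZ : mmap (@ratr R) (fun k => mxvec Z 0 k) D = \det (mxsub f h B).
  by rewrite /D -det_map_mx map_mxsub evE.
have D0 : D != 0.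
  by apply: contraNneq dB => D0'; rewrite -DZ D0' rmorph0.
have := gP D D0; rewrite /D -det_map_mx map_mxsub evE -/A => dA.
have rk : \rank (mxsub f h A) = \rank B.
  by apply: mxrank_unit; rewrite unitmxE unitfE.
rewrite -rk.
have -> : mxsub f h A = rowsub f A *m colsub h 1%:M by rewrite -mxsub_mul mulmx1.
exact: leq_trans (mxrankM_maxl _ _) (mxrankS (rowsub_sub _ _)).
Qed.


Definition phi (R : realType) (t : {perm 'I_n}) : 'rV[R]_(n*d) -> 'rV[R]_(n*d) :=
  fun x => mxvec (row_perm t (vec_mx x)).
Lemma phi_lin (R : realType) t : linear (@phi R t).
Proof. by move=> a x y; rewrite /phi !linearP. Qed.
HB.instance Definition _ (R : realType) t :=
  GRing.isLinear.Build R _ _ _ (@phi R t) (@phi_lin R t).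
Lemma mulPhi (R : realType) t x : x *m lin1_mx (@phi R t) = phi t x.
Proof. by rewrite mul_rV_lin1. Qed.

Lemma row_relabel (R : realType) (s : {perm 'I_n}) (P : 'M[R]_(n,d)) a b :
  rig_row P ((s^-1)%g a) ((s^-1)%g b) = phi s (rig_row (row_perm (s^-1)%g P) a b).
Proof.
rewrite /phi /rig_row mxvecK; congr mxvec; apply/matrixP => i k; rewrite !mxE.
have Ei : forall c, (s i == c) = (i == (s^-1)%g c).
  by move=> c; rewrite -(inj_eq (@perm_inj _ (s^-1)%g)) permK.
by rewrite !Ei.
Qed.

Lemma rig_rank_ext (R : realType) (Y Y' : rel 'I_n) (P : 'M[R]_(n,d)) :
  (forall a b, Y a b = Y' a b) -> rig_rank Y P = rig_rank Y' P.
Proof. by move=> H; rewrite /rig_rank (eq_bigl (fun e => Y' e.1 e.2)) // => e; apply: H. Qed.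

Lemma relabel (R : realType) (s : {perm 'I_n}) (Y : rel 'I_n) (P : 'M[R]_(n,d)) :
  (rig_rank (fun a b => Y (s a) (s b)) P <= rig_rank Y (row_perm (s^-1)%g P))%N.
Proof.
rewrite /rig_rank.
rewrite (reindex_inj (h := fun e : 'I_n * 'I_n => ((s^-1)%g e.1, (s^-1)%g e.2))) /=; last first.
  by move=> [a b] [a' b'] /= [/perm_inj -> /perm_inj ->].
rewrite (eq_bigl (fun e => Y e.1 e.2)); last by move=> e /=; rewrite !permKV.
set Q := row_perm (s^-1)%g P.
apply: leq_trans (mxrankM_maxl (\sum_(e | Y e.1 e.2) <<rig_row Q e.1 e.2>>)%MS (lin1_mx (phi s))).
apply: mxrankS; apply/sumsmx_subP => e Ye; rewrite genmxE row_relabel -mulPhi.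
by apply: submxMr; apply: (sumsmx_sup e) => //; rewrite genmxE.
Qed.

Lemma rank_swap (R : realType) (s : {perm 'I_n}) (Y : rel 'I_n) (P : 'M[R]_(n,d)) :
  generic P -> (s^-1)%g = s ->
  rig_rank (fun a b => Y (s a) (s b)) P = rig_rank Y P.
Proof.
move=> gP ss; apply/eqP; rewrite eqn_leq; apply/andP; split.
  by apply: leq_trans (relabel s Y P) _; exact: generic_max.
have ssK : forall a, s (s a) = a by move=> a; rewrite -{1}ss permK.
rewrite (@rig_rank_ext R Y (fun a b => (fun a b => Y (s a) (s b)) (s a) (s b))); last first.
  by move=> a b /=; rewrite !ssK.
by apply: leq_trans (relabel s (fun a b => Y (s a) (s b)) P) _; exact: generic_max.
Qed.


Lemma rig_rowC (R : realType) (P : 'M[R]_(n,d)) x y :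
  rig_row P y x = rig_row P x y.
Proof.
rewrite /rig_row; congr mxvec; apply/matrixP => i k; rewrite !mxE.
case: (eqVneq y x) => [->|yx] //.
case: (eqVneq i y) => [->|iy]; first by rewrite (negbTE yx).
by case: (eqVneq i x).
Qed.

Definition Sp (R : realType) (Y : rel 'I_n) (P : 'M[R]_(n,d)) :=
  (\sum_(xy : 'I_n * 'I_n | Y xy.1 xy.2) <<rig_row P xy.1 xy.2>>)%MS.

Lemma rank_add1 (R : realType) m (D : 'M[R]_(m, n * d)) (r : 'rV[R]_(n * d)) :
  (\rank (D + <<r>>)%MS == \rank D + 1)%N = ~~ (r <= D)%MS.
Proof.
case: (boolP (r <= D)%MS) => rD.
  have -> : \rank (D + <<r>>)%MS = \rank D.
    apply/eqmx_rank; apply/andP; split.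
      by rewrite addsmx_sub submx_refl genmxE.
    exact: addsmxSl.
  by apply/negbTE; apply/eqP; lia.
have r0 : r != 0 by apply: contraNneq rD => ->; rewrite sub0mx.
have /leqifP := mxrank_leqif_sup (addsmxSl D <<r>>%MS).
rewrite addsmx_sub submx_refl genmxE (negbTE rD) /= => lt.
have := mxrank_adds_leqif D <<r>>%MS; move/leqifP.
rewrite genmxE rank_rV r0 => le.
apply/eqP; apply/eqP; rewrite eqn_leq; apply/andP; split.
  by case: ifP le => _ ; [move/eqP ->|move/ltnW].
by rewrite addn1.
Qed.

Lemma bridge_iff (R : realType) (g : rel 'I_n) (P : 'M[R]_(n,d)) x y :
  ssrbool.symmetric g -> g x y ->
  rd_bridge g P x y <-> ~~ (rig_row P x y <= Sp (del_edge g x y) P)%MS.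
Proof.
move=> gs gxy.
have E : rig_rank g P = \rank (Sp (del_edge g x y) P + <<rig_row P x y>>)%MS.
  apply/eqmx_rank; apply/andP; split.
    apply/sumsmx_subP => e ge.
    case: (boolP (del_edge g x y e.1 e.2)) => de.
      apply: submx_trans (addsmxSl _ _).
      by apply: (sumsmx_sup e) => //.
    apply: submx_trans (addsmxSr _ _).
    move: de; rewrite /del_edge ge /= negbK.
    case/orP => /andP[/eqP -> /eqP ->]; rewrite !genmxE //.
    by rewrite rig_rowC.
  rewrite addsmx_sub; apply/andP; split.
    apply/sumsmx_subP => e /andP[ge _].
    by apply: (sumsmx_sup e).
  by apply: (sumsmx_sup (x, y)) => //; rewrite genmxE.
rewrite /rd_bridge -(rank_add1 (Sp (del_edge g x y) P)) -E; split.
  by case=> _ ->.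
by move/eqP => ->.
Qed.

End Rig.

Unset Implicit Arguments.

Theorem proposition2p7 (n d : nat) (g : rel 'I_n) (u v w : 'I_n) :
  simple_graph g -> (1 <= d)%N ->
  u != v -> u != w -> v != w ->
  g v u ->
  (forall x : 'I_n, g v x -> g w x || (x == w)) ->
  forall (R : realType) (P : 'M[R]_(n, d)), generic P ->
  rd_bridge g P u w -> rd_bridge (del_vertex g w) P u v.
Proof.
move=> [gsym girr] d1 uv uw vw gvu hN R P gP hbr.
have guw : g u w by case: hbr.
set s := tperm v w.
have ss : (s^-1)%g = s by rewrite tpermV.
have sv : s v = w by rewrite tpermL.
have su : s u = u by rewrite tpermD // eq_sym.
have Eu : forall a, (s a == u) = (a == u).
  by move=> a; rewrite -{1}su (inj_eq perm_inj).
have Ew : forall a, (s a == w) = (a == v).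
  by move=> a; rewrite -sv (inj_eq perm_inj).
pose sg := fun a b => g (s a) (s b).
have sgsym : ssrbool.symmetric sg by move=> a b; rewrite /sg gsym.
have hK : rig_rank (del_edge sg u v) P = rig_rank (del_edge g u w) P.
  rewrite -(rank_swap (del_edge g u w) gP ss); apply: rig_rank_ext => a b.
  by rewrite /del_edge /sg !Eu !Ew.
have hG : rig_rank sg P = rig_rank g P := rank_swap g gP ss.
have sguv : sg u v by rewrite /sg su sv.
have notin : ~~ (rig_row P u v <= Sp (del_edge sg u v) P)%MS.
  apply/(bridge_iff P sgsym sguv); split => //.
  by rewrite hK hG; case: hbr.
have G'sym : ssrbool.symmetric (del_vertex g w).
  move=> a b; rewrite /del_vertex gsym.
  by case: (a != w); case: (b != w); rewrite ?andbT ?andbF.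
have G'uv : del_vertex g w u v by rewrite /del_vertex gsym gvu uw vw.
apply/(bridge_iff P G'sym G'uv).
apply: contra notin => H; apply: submx_trans H _.
apply/sumsmx_subP => e He; apply: (sumsmx_sup e); last by rewrite submx_refl.
move: e He => [a b] /=; rewrite /del_edge /del_vertex /sg.
move=> /andP[/and3P[gab aw bw] ->]; rewrite andbT.
have sD : forall c, c != v -> c != w -> s c = c.
  by move=> c cv cw; rewrite tpermD // eq_sym.
case: (eqVneq a v) => [av|av].
  subst a; rewrite sv.
  have bv : b != v by apply/eqP => bv; subst b; rewrite girr in gab.
  rewrite (sD b bv bw).
  by have := hN b gab; rewrite (negbTE bw) orbF.
case: (eqVneq b v) => [bv|bv].
  subst b; rewrite sv (sD a av aw) gsym.
  by have := hN a (etrans (gsym _ _) gab); rewrite (negbTE aw) orbF.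
by rewrite (sD a av aw) (sD b bv bw).
Qed.
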